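(* Let $R$ be a commutative local ring and $s\in U(R)$. Then the ring $M_2(R;s)$ is not strongly $J$-clean.
   Context: A commutative ring $R$ is local if it has a unique maximal ideal $J(R)$ (its Jacobson radical); $U(R)$ is the group of units. For $s\in R$, $M_2(R;s)$ denotes the ring whose elements are the $2\times 2$ arrays $\left[\begin{smallmatrix} a&b\\ c&d\end{smallmatrix}\right]$ with $a,b,c,d\in R$, with componentwise addition and multiplication $\left[\begin{smallmatrix} a&b\\ c&d\end{smallmatrix}\right]\left[\begin{smallmatrix} a'&b'\\ c'&d'\end{smallmatrix}\right]=\left[\begin{smallmatrix} aa'+s^2bc'&ab'+bd'\\ ca'+dc'&s^2cb'+dd'\end{smallmatrix}\right]$. An element $a$ of a ring $T$ is strongly $J$-clean if there is an idempotent $e\in T$ with $ae=ea$ and $a-e\in J(T)$; a ring is strongly $J$-clean if all its elements are. *)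

(* Defs.v *)
From HB Require Import structures.
From mathcomp Require Import all_boot all_order all_algebra.
From mathcomp Require Import ring.

Set Implicit Arguments.
Unset Strict Implicit.
Unset Printing Implicit Defensive.

Import GRing.Theory.
Local Open Scope ring_scope.

Definition left_ideal (T : nzRingType) (I : T -> Prop) : Prop :=
  [/\ I 0,
      (forall x y, I x -> I y -> I (x + y)) &
      (forall r x, I x -> I (r * x))].

Definition proper_left_ideal (T : nzRingType) (I : T -> Prop) : Prop :=
  left_ideal I /\ ~ I 1.

Definition maximal_left_ideal (T : nzRingType) (I : T -> Prop) : Prop :=
  proper_left_ideal I /\
  forall K : T -> Prop, proper_left_ideal K ->
    (forall x, I x -> K x) -> forall x, K x -> I x.

Definition jacobson (T : nzRingType) (x : T) : Prop :=
  forall I : T -> Prop, maximal_left_ideal I -> I x.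

(* A commutative ring is local if it has a unique maximal ideal
   (in a commutative ring, left ideals are exactly the ideals). *)
Definition local_ring (R : comNzRingType) : Prop :=
  exists M : R -> Prop, maximal_left_ideal M /\
    forall K : R -> Prop, maximal_left_ideal K -> forall x, K x <-> M x.

Definition idempotent (T : nzRingType) (e : T) : Prop := e * e = e.

Definition strongly_J_clean_elt (T : nzRingType) (a : T) : Prop :=
  exists e : T, [/\ idempotent e, a * e = e * a & jacobson (a - e)].

Definition strongly_J_clean (T : nzRingType) : Prop :=
  forall a : T, strongly_J_clean_elt a.

Record M2s (R : comNzRingType) (s : R) := MkM2s {
  m11 : R; m12 : R; m21 : R; m22 : R }.
Arguments MkM2s {R s}.

Section M2sRing.
Variables (R : comNzRingType) (s : R).

Definition M2s_to (A : M2s s) : R * R * R * R :=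
  (m11 A, m12 A, m21 A, m22 A).
Definition M2s_of (t : R * R * R * R) : M2s s :=
  let: (a, b, c, d) := t in MkM2s a b c d.
Lemma M2s_toK : cancel M2s_to M2s_of. Proof. by case. Qed.

HB.instance Definition _ := Equality.copy (M2s s) (can_type M2s_toK).
HB.instance Definition _ := Choice.copy (M2s s) (can_type M2s_toK).

Definition M2s_zero : M2s s := MkM2s 0 0 0 0.
Definition M2s_opp (A : M2s s) : M2s s :=
  MkM2s (- m11 A) (- m12 A) (- m21 A) (- m22 A).
Definition M2s_add (A B : M2s s) : M2s s :=
  MkM2s (m11 A + m11 B) (m12 A + m12 B) (m21 A + m21 B) (m22 A + m22 B).

Lemma M2s_ext (A B : M2s s) :
  m11 A = m11 B -> m12 A = m12 B -> m21 A = m21 B -> m22 A = m22 B -> A = B.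
Proof. by case: A; case: B => /= ? ? ? ? ? ? ? ? -> -> -> ->. Qed.

Lemma M2s_addA : associative M2s_add.
Proof. by move=> A B C; apply: M2s_ext => /=; rewrite addrA. Qed.
Lemma M2s_addC : commutative M2s_add.
Proof. by move=> A B; apply: M2s_ext => /=; rewrite addrC. Qed.
Lemma M2s_add0 : left_id M2s_zero M2s_add.
Proof. by move=> A; apply: M2s_ext => /=; rewrite add0r. Qed.
Lemma M2s_addN : left_inverse M2s_zero M2s_opp M2s_add.
Proof. by move=> A; apply: M2s_ext => /=; rewrite addNr. Qed.

HB.instance Definition _ :=
  GRing.isZmodule.Build (M2s s) M2s_addA M2s_addC M2s_add0 M2s_addN.

Definition M2s_one : M2s s := MkM2s 1 0 0 1.
Definition M2s_mul (A B : M2s s) : M2s s :=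
  MkM2s (m11 A * m11 B + s ^+ 2 * m12 A * m21 B)
        (m11 A * m12 B + m12 A * m22 B)
        (m21 A * m11 B + m22 A * m21 B)
        (s ^+ 2 * m21 A * m12 B + m22 A * m22 B).

Lemma M2s_mulA : associative M2s_mul.
Proof. by move=> A B C; apply: M2s_ext => /=; ring. Qed.
Lemma M2s_mul1 : left_id M2s_one M2s_mul.
Proof. by move=> A; apply: M2s_ext => /=; ring. Qed.
Lemma M2s_mulr1 : right_id M2s_one M2s_mul.
Proof. by move=> A; apply: M2s_ext => /=; ring. Qed.
Lemma M2s_mulDl : left_distributive M2s_mul +%R.
Proof. by move=> A B C; apply: M2s_ext => /=; ring. Qed.
Lemma M2s_mulDr : right_distributive M2s_mul +%R.
Proof. by move=> A B C; apply: M2s_ext => /=; ring. Qed.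
Lemma M2s_one_neq0 : M2s_one != 0.
Proof.
apply/eqP => /(congr1 (@m11 R s)) /= /eqP; by rewrite oner_eq0.
Qed.

HB.instance Definition _ :=
  GRing.Zmodule_isNzRing.Build (M2s s) M2s_mulA M2s_mul1 M2s_mulr1
    M2s_mulDl M2s_mulDr M2s_one_neq0.

End M2sRing.

Notation "''M_2' ( R ; s )" := (@M2s R s)
  (at level 8, format "''M_2' ( R ;  s )") : type_scope.

(* Main.v *)
Require Import Defs.
From HB Require Import structures.
From mathcomp Require Import all_boot all_order all_algebra.
From mathcomp Require Import ring.
From Stdlib Require Import Classical.

Set Implicit Arguments.
Unset Strict Implicit.
Import GRing.Theory.
Local Open Scope ring_scope.

Section Aux.
Variables (R : comUnitRingType) (s : R).

Lemma max_gen (M : R -> Prop) (x : R) : maximal_left_ideal M -> ~ M x ->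
  exists m r, M m /\ 1 = m + r * x.
Proof.
move=> [[[M0 MD MM] M1] Mmax] Mx.
apply: NNPP => H.
pose K := fun y : R => exists m r, M m /\ y = m + r * x.
have KI : proper_left_ideal K.
  split; last by move=> [m [r [Mm E]]]; apply: H; exists m, r.
  split.
  - by exists 0, 0; split => //; rewrite mul0r addr0.
  - move=> y z [m [r [Mm ->]]] [m' [r' [Mm' ->]]].
    exists (m + m'), (r + r'); split; [exact: MD|ring].
  - move=> t y [m [r [Mm ->]]]; exists (t * m), (t * r); split; [exact: MM|ring].
apply: Mx; apply: (Mmax K KI).
- by move=> y My; exists y, 0; split => //; rewrite mul0r addr0.
- by exists 0, 1; split => //; rewrite mul1r add0r.
Qed.

Lemma M_opp (M : R -> Prop) x : left_ideal M -> M x -> M (- x).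
Proof. by move=> [_ _ MM] Mx; rewrite -mulN1r; apply: MM. Qed.

Definition I1 (M : R -> Prop) (X : M2s s) := M (m11 X) /\ M (m21 X).
Definition I2 (M : R -> Prop) (X : M2s s) := M (m12 X) /\ M (m22 X).

Lemma I_max1 M : s \is a GRing.unit -> maximal_left_ideal M -> maximal_left_ideal (I1 M).
Proof.
move=> su Mm; have [[[M0 MD MM] M1] Mmax] := Mm.
split; first split.
- split.
  + by split.
  + by move=> x y [? ?] [? ?]; split; apply: MD.
  + move=> r x [h1 h2]; split => /=; apply: MD; apply: MM => //.
- by move=> [h _]; apply: M1.
move=> K [[K0 KD KM] K1] sub X KX.
have key : forall A : M2s s, I1 M (1 - A * X) -> False.
  move=> A h; apply: K1.
  have -> : (1 : M2s s) = (1 - A * X) + A * X by rewrite subrK.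
  by apply: KD; [apply: sub | apply: KM].
split.
- apply: NNPP => nx.
  have [m [r [Mmm E]]] := max_gen Mm nx.
  apply: (key (MkM2s r 0 0 0)); split => /=.
  + have -> : 1 - (r * m11 X + s ^+ 2 * 0 * m21 X) = m by rewrite E; ring.
    done.
  + have -> : 0 - (0 * m11 X + 0 * m21 X) = 0 :> R by ring.
    done.
- apply: NNPP => nx.
  have [m [r [Mmm E]]] := max_gen Mm nx.
  apply: (key (MkM2s 0 (r / s ^+ 2) 0 0)); split => /=.
  + have -> : 1 - (0 * m11 X + s ^+ 2 * (r / s ^+ 2) * m21 X) = m.
      rewrite (mulrCA (s ^+ 2) r) divrr ?unitrX // mulr1 E; ring.
    done.
  + have -> : 0 - (0 * m11 X + 0 * m21 X) = 0 :> R by ring.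
    done.
Qed.

Lemma I_max2 M : s \is a GRing.unit -> maximal_left_ideal M -> maximal_left_ideal (I2 M).
Proof.
move=> su Mm; have [[[M0 MD MM] M1] Mmax] := Mm.
split; first split.
- split.
  + by split.
  + by move=> x y [? ?] [? ?]; split; apply: MD.
  + move=> r x [h1 h2]; split => /=; apply: MD; apply: MM => //.
- by move=> [_ h]; apply: M1.
move=> K [[K0 KD KM] K1] sub X KX.
have key : forall A : M2s s, I2 M (1 - A * X) -> False.
  move=> A h; apply: K1.
  have -> : (1 : M2s s) = (1 - A * X) + A * X by rewrite subrK.
  by apply: KD; [apply: sub | apply: KM].
split.
- apply: NNPP => nx.
  have [m [r [Mmm E]]] := max_gen Mm nx.
  apply: (key (MkM2s 0 0 (r / s ^+ 2) 0)); split => /=.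
  + have -> : 0 - (0 * m12 X + 0 * m22 X) = 0 :> R by ring.
    done.
  + have -> : 1 - (s ^+ 2 * (r / s ^+ 2) * m12 X + 0 * m22 X) = m.
      rewrite (mulrCA (s ^+ 2) r) divrr ?unitrX // mulr1 E; ring.
    done.
- apply: NNPP => nx.
  have [m [r [Mmm E]]] := max_gen Mm nx.
  apply: (key (MkM2s 0 0 0 r)); split => /=.
  + have -> : 0 - (0 * m12 X + 0 * m22 X) = 0 :> R by ring.
    done.
  + have -> : 1 - (s ^+ 2 * 0 * m12 X + r * m22 X) = m by rewrite E; ring.
    done.
Qed.
End Aux.

Theorem corollary2p10 (R : comUnitRingType) (s : R) :
  local_ring R -> s \is a GRing.unit -> ~ strongly_J_clean (M2s s).
Proof.
move=> [M [Mm _]] su sJ.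
have [[[M0 MD MM] M1] _] := Mm.
have [e [ide _ jac]] := sJ (MkM2s 0 0 1 0).
have [h11 h21] := jac _ (I_max1 su Mm).
have [h12 h22] := jac _ (I_max2 su Mm).
move: h11 h21 h22 => /= h11 h21 h22.
have e21 : m21 (e * e) = m21 e by rewrite ide.
move: e21 => /= e21.
apply: M1.
have -> : 1 = (1 + - m21 e) + (m21 e * (0 + - m11 e)) * (-1) + (m21 e * (0 + - m22 e)) * (-1).
  apply: (@eq_trans _ _ (1 + - m21 e + (m21 e * m11 e + m22 e * m21 e))).
    by rewrite e21; ring.
  ring.
apply: (MD); first apply: (MD).
- exact: h21.
- by rewrite mulrC; apply: (MM); apply: (MM).
- by rewrite mulrC; apply: (MM); apply: (MM).
Qed.
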